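(* Let $n,k$ be integers with $1<k<n-1$, let $\mathcal{P}_{k,n}=\{x\in[0,1]^n:\sum_{i=1}^nx_i=k\}$, let $\mathcal{F}$ be a strong Bernoulli factory for $\mathcal{P}_{k,n}$, and let $v,v'$ be two distinct vertices of $\mathcal{P}_{k,n}$. Then for every $T\ge0$, $\nabla P_{v,T}(v')=0$.
   Context: A Bernoulli factory with output set $V$ (for inputs $x\in[0,1]^n$) is a (possibly infinite) rooted binary tree whose internal nodes are labeled by an index $i\in[n]$ or a known constant $c\in(0,1)$ and whose leaves are labeled by elements of $V$; on input $x$ one walks from the root, at a node labeled $i$ flipping a fresh independent coin that is $1$ with probability $x_i$, at a node labeled $c$ a fresh coin of bias $c$, following the edge labeled by the outcome, and outputs the label of the leaf reached; $\mathcal{F}(x)$ is the output and $T_{\mathcal{F}}(x)$ the depth of the leaf reached. For a polytope $\mathcal{P}$ with vertex set $V$, a strong Bernoulli factory for $\mathcal{P}$ is such a factory with output set $V$ that terminates almost surely and satisfies $\mathbb{E}[\mathcal{F}(x)]=x$ for all $x\in\mathcal{P}$. $P_{v,T}(x)=\Pr[\mathcal{F}(x)=v\wedge T_{\mathcal{F}}(x)\le T]$, regarded as the polynomial on $\mathbb{R}^n$ equal to the sum, over leaves labeled $v$ at depth at most $T$, of the product of the transition probabilities along the root-to-leaf path; $\nabla$ is its gradient in $\mathbb{R}^n$. *)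

(* Defs.v *)
From HB Require Import structures.
From mathcomp Require Import all_boot all_order all_algebra.
From mathcomp Require Import all_classical all_reals all_analysis.
Set Implicit Arguments. Unset Strict Implicit. Unset Printing Implicit Defensive.
Import Order.TTheory GRing.Theory Num.Theory.
Import numFieldNormedType.Exports.
Local Open Scope classical_set_scope.
Local Open Scope ring_scope.

Section BF.
Variables (R : realType) (n : nat).

(* Node labels of a Bernoulli factory: coin index i, known constant c, or
   a leaf labelled by an output point of R^n (row vectors). *)
Inductive node := NCoin of 'I_n | NConst of R | NLeaf of 'rV[R]_n.

(* A (possibly infinite) rooted binary tree: the node reached from the root
   by the sequence of edge labels s (true = outcome 1).  Only nodes all of
   whose proper ancestors are internal belong to the tree. *)
Definition tree := seq bool -> node.

Definition internal (nd : node) : bool :=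
  if nd is NLeaf _ then false else true.

Definition reached (t : tree) (s : seq bool) : bool :=
  all (fun k => internal (t (take k s))) (iota 0 (size s)).

Definition leaf_label (t : tree) (s : seq bool) : option 'rV[R]_n :=
  if reached t s then (if t s is NLeaf v then Some v else None) else None.

Definition edge_prob (nd : node) (b : bool) (x : 'rV[R]_n) : R :=
  match nd with
  | NCoin i => if b then x 0 i else 1 - x 0 i
  | NConst c => if b then c else 1 - c
  | NLeaf _ => 0
  end.

Definition path_prob (t : tree) (s : seq bool) (x : 'rV[R]_n) : R :=
  \prod_(k < size s) edge_prob (t (take k s)) (nth false s k) x.

Definition P_vT (t : tree) (v : 'rV[R]_n) (T : nat) (x : 'rV[R]_n) : R :=
  \sum_(d < T.+1) \sum_(s : d.-tuple bool)
     (if leaf_label t s == Some v then path_prob t s x else 0).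

Definition Pr_le (t : tree) (T : nat) (x : 'rV[R]_n) : R :=
  \sum_(d < T.+1) \sum_(s : d.-tuple bool)
     (if leaf_label t s is Some _ then path_prob t s x else 0).

Definition mean_le (t : tree) (T : nat) (x : 'rV[R]_n) : 'rV[R]_n :=
  \sum_(d < T.+1) \sum_(s : d.-tuple bool)
     (if leaf_label t s is Some w then path_prob t s x *: w else 0).

Definition is_vertex (P : set 'rV[R]_n) (x : 'rV[R]_n) : Prop :=
  P x /\ forall (a b : 'rV[R]_n) (l : R), P a -> P b -> 0 < l < 1 ->
    x = l *: a + (1 - l) *: b -> a = b.

Definition strong_BF (P : set 'rV[R]_n) (t : tree) : Prop :=
  [/\ (forall s c, reached t s -> t s = NConst c -> 0 < c < 1),
      (forall s v, leaf_label t s = Some v -> is_vertex P v),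
      (forall x, P x -> Pr_le t T x @[T --> \oo] --> (1 : R)) &
      (forall x, P x -> mean_le t T x @[T --> \oo] --> x)].

Definition Pkn (k : nat) : set 'rV[R]_n :=
  [set x | (forall i, 0 <= x 0 i <= 1) /\ \sum_(i < n) x 0 i = k%:R].

End BF.

(* Main.v *)
Require Import Defs.
From HB Require Import structures.
From mathcomp Require Import all_boot all_order all_algebra.
From mathcomp Require Import all_classical all_reals all_analysis.
From mathcomp Require Import ring lra zify.
Import Order.TTheory GRing.Theory Num.Theory.
Import numFieldNormedType.Exports.
Local Open Scope classical_set_scope.
Local Open Scope ring_scope.
Set Implicit Arguments. Unset Strict Implicit.

Section Aux.
Variables (R : realType) (n : nat) (t : tree R n).

Lemma reached_take s m : reached t s -> (m <= size s)%N -> reached t (take m s).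
Proof.
move=> /allP rs ms; apply/allP => l; rewrite mem_iota add0n size_take_min.
move=> /andP[_ lm]; rewrite take_takel; last by apply: ltnW; rewrite (leq_trans lm) // geq_minl.
apply: rs; rewrite mem_iota add0n /=.
by rewrite (leq_trans lm) // geq_minr.
Qed.

Lemma path_prob_ge0 s (x : 'rV[R]_n) :
  (forall s c, reached t s -> t s = NConst n c -> 0 < c < 1) ->
  reached t s -> (forall i, 0 <= x 0 i <= 1) -> 0 <= path_prob t s x.
Proof.
move=> hc rs hx; rewrite /path_prob; apply: prodr_ge0 => k _.
case E: (t (take k s)) => [i|c|w] /=.
- by have /andP[h0 h1] := hx i; case: (nth _ _ _); rewrite ?subr_ge0.
- have /andP[c0 c1] := hc _ _ (@reached_take s k rs (ltnW (ltn_ord k))) E.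
  by case: (nth _ _ _); rewrite ?subr_ge0 ltW.
- by [].
Qed.

End Aux.

Section Diff.
Variables (R : realType) (n : nat).

Lemma diff_sum_gen (I : Type) (r : seq I) (p : pred I) (F : I -> 'rV[R]_n -> R) x :
  (forall i, differentiable (F i) x) ->
  differentiable (fun y => \sum_(i <- r | p i) F i y) x.
Proof.
move=> hF; elim: r => [|a r IH].
  under eq_fun do rewrite big_nil; exact: differentiable_cst.
under eq_fun do rewrite big_cons.
case: (p a) => //.
exact: differentiableD (hF a) IH.
Qed.

Lemma diff_prod_gen (I : Type) (r : seq I) (p : pred I) (F : I -> 'rV[R]_n -> R) x :
  (forall i, differentiable (F i) x) ->
  differentiable (fun y => \prod_(i <- r | p i) F i y) x.
Proof.
move=> hF; elim: r => [|a r IH].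
  under eq_fun do rewrite big_nil; exact: differentiable_cst.
under eq_fun do rewrite big_cons.
case: (p a) => //.
exact: differentiableM (hF a) IH.
Qed.

Lemma diff_edge (nd : node R n) b x : differentiable (edge_prob nd b) x.
Proof.
case: nd => [i|c|w] /=; case: b => /=.
- exact: differentiable_coord.
- apply: differentiableB; [exact: differentiable_cst | exact: differentiable_coord].
- exact: differentiable_cst.
- exact: differentiable_cst.
- exact: differentiable_cst.
- exact: differentiable_cst.
Qed.

Lemma diff_P (t : tree R n) v T x : differentiable (P_vT t v T) x.
Proof.
rewrite /P_vT; apply: diff_sum_gen => d; apply: diff_sum_gen => s.
case: (_ == _); last exact: differentiable_cst.
rewrite /path_prob; apply: diff_prod_gen => k; exact: diff_edge.
Qed.

End Diff.

Section Dir.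
Variables (R : realType) (n : nat).

Lemma right_cvg (g : R -> R) (l : R) : g @ 0^' --> l -> g @ 0^'+ --> l.
Proof.
move=> hg A /hg /nbhs_ballP [_ /posnumP[e] xe_A].
by exists e%:num => //= y xe_y /gt_eqF/negbT/xe_A; exact.
Qed.
Arguments right_cvg {g l}.

Lemma dir_ge (f : 'rV[R]_n -> R) a u : derivable f a u ->
  (forall h : R, 0 < h < 1 -> f a <= f (h *: u + a)) -> 0 <= 'D_u f a.
Proof.
move=> df hf.
have := right_cvg df; rewrite -/(derive f a u) => hc.
apply: (cvgr_to_ge hc).
near=> h => /=.
have h0 : 0 < h by near: h; exact: nbhs_right_gt.
have h1 : h < 1 by near: h; exact: nbhs_right_lt.
rewrite /shift /=; apply: mulr_ge0; first by rewrite invr_ge0 ltW.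
by rewrite subr_ge0 hf // h0 h1.
Unshelve. all: by end_near.
Qed.

Lemma dir_le (f : 'rV[R]_n -> R) a u : derivable f a u ->
  (forall h : R, 0 < h < 1 -> f (h *: u + a) <= f a) -> 'D_u f a <= 0.
Proof.
move=> df hf.
have := right_cvg df; rewrite -/(derive f a u) => hc.
apply: (cvgr_to_le hc).
near=> h => /=.
have h0 : 0 < h by near: h; exact: nbhs_right_gt.
have h1 : h < 1 by near: h; exact: nbhs_right_lt.
rewrite /shift /=; apply: mulr_ge0_le0; first by rewrite invr_ge0 ltW.
by rewrite subr_le0 hf // h0 h1.
Unshelve. all: by end_near.
Qed.

End Dir.

Section Face.
Variables (R : realType) (n : nat) (t : tree R n).

Lemma leaf_reached s w : leaf_label t s = Some w -> reached t s.
Proof. by rewrite /leaf_label; case: (reached t s). Qed.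

Lemma cvg_sumR (I : Type) (r : seq I) (F : I -> nat -> R) (a : I -> R) :
  (forall i, F i @ \oo --> a i) ->
  (fun T => \sum_(i <- r) F i T) @ \oo --> \sum_(i <- r) a i.
Proof.
move=> hF; elim: r => [|b r IH].
  under eq_fun do rewrite big_nil; rewrite big_nil; exact: cvg_cst.
under eq_fun do rewrite big_cons; rewrite big_cons.
exact: cvgD (hF b) IH.
Qed.

Variables (k : nat) (hF : strong_BF (Pkn k) t) (c : R) (wt : 'I_n -> R).
Let f (y : 'rV[R]_n) := c + \sum_l wt l * y 0 l.

Lemma face_zero (x : 'rV[R]_n) (Px : Pkn k x) (fx : f x = 0)
  (fpos : forall y, Pkn k y -> 0 <= f y) v T : f v * P_vT t v T x <= 0.
Proof.
case: hF => hc hv hpr hmean.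
pose G d := \sum_(s : d.-tuple bool)
   (if leaf_label t s is Some w then path_prob t s x * f w else 0).
pose Q T := \sum_(d < T.+1) G d.
have termge0 (s : seq bool) :
   0 <= (if leaf_label t s is Some w then path_prob t s x * f w else 0).
  case E: leaf_label => [w|//]; apply: mulr_ge0.
    exact: (path_prob_ge0 hc (leaf_reached E) (proj1 Px)).
  exact: (fpos _ (proj1 (hv _ _ E))).
have G0 d : 0 <= G d by apply: sumr_ge0 => s _; exact: termge0.
have QE T' : Q T' = c * Pr_le t T' x + \sum_l wt l * mean_le t T' x 0 l.
  rewrite /Q /G /Pr_le /mean_le.
  under [X in _ = _ + X]eq_bigr => l _ do rewrite summxE mulr_sumr.
  rewrite exchange_big /= mulr_sumr -big_split /=; apply: eq_bigr => d _.
  under [X in _ = _ + X]eq_bigr => l _ do rewrite summxE mulr_sumr.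
  rewrite exchange_big /= mulr_sumr -big_split /=; apply: eq_bigr => s _.
  case: leaf_label => [w|].
    rewrite /f mulrDr mulr_sumr mulrC; congr (_ + _); apply: eq_bigr => l _.
    by rewrite !mxE; ring.
  by rewrite mulr0 add0r big1 // => l _; rewrite mxE mulr0.
have Qcvg : Q @ \oo --> (0 : R).
  rewrite -fx /f.
  have -> : Q = (fun T' => c * Pr_le t T' x + \sum_l wt l * mean_le t T' x 0 l).
    by apply: funext => T'; exact: QE.
  apply: cvgD.
    by rewrite -[X in _ --> X]mulr1; apply: cvgMl_tmp; exact: hpr.
  apply: cvg_sumR => l; apply: cvgMl_tmp.
  exact: (cvg_comp _ _ (hmean _ Px) (@coord_continuous R 1 n 0 l x)).
have Qmono T' : (T <= T')%N -> Q T <= Q T'.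
  move=> TT; rewrite /Q -!(big_mkord xpredT G).
  rewrite [X in _ <= X](@big_cat_nat _ _ _ T.+1) //= ?ltnS //.
  by rewrite lerDl; apply: sumr_ge0 => i _.
have QT0 : Q T <= 0.
  apply: (cvgr_to_ge Qcvg); near=> T'; apply: Qmono; near: T'.
  exact: nbhs_infty_ge.
apply: le_trans QT0.
rewrite /P_vT /Q /G mulr_sumr; apply: ler_sum => d _.
rewrite mulr_sumr; apply: ler_sum => s _.
case E: leaf_label => [w|]; last by rewrite mulr0.
case: eqP => [[<-]|_]; first by rewrite mulrC.
by rewrite mulr0; have := termge0 s; rewrite E.
Unshelve. all: by end_near.
Qed.

End Face.

Section Vert.
Variables (R : realType) (n : nat).

Definition dlt (j : 'I_n) : 'rV[R]_n := delta_mx 0 j.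

Lemma dltE j l : dlt j 0 l = (l == j)%:R.
Proof. by rewrite /dlt mxE eqxx. Qed.

Lemma sum_dlt j : \sum_l dlt j 0 l = 1.
Proof.
rewrite (bigD1 j) //= big1 => [|l /negbTE lj]; first by rewrite dltE eqxx addr0.
by rewrite dltE lj.
Qed.

Lemma sum_ind j : \sum_(l < n) ((l == j)%:R : R) = 1.
Proof. by rewrite (bigD1 j) //= eqxx big1 ?addr0 // => l /negbTE ->. Qed.

Lemma shiftE (u : 'rV[R]_n) h i j l :
  (u + h *: (dlt j - dlt i)) 0 l = u 0 l + h * ((l == j)%:R - (l == i)%:R).
Proof. by rewrite !mxE !eqxx. Qed.

Lemma sum_shift (u : 'rV[R]_n) h i j :
  \sum_l (u + h *: (dlt j - dlt i)) 0 l = \sum_l u 0 l.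
Proof.
under eq_bigr do rewrite shiftE mulrBr.
rewrite big_split /= sumrB -!mulr_sumr.
by rewrite !sum_ind; ring.
Qed.

Lemma vertex01 k (v : 'rV[R]_n) : is_vertex (Pkn k) v ->
  forall l, v 0 l = 0 \/ v 0 l = 1.
Proof.
move=> [[hc hs] hv] p.
have /andP[p0 p1] := hc p.
have [//|/not_orP [np0 np1]] := lem (v 0 p = 0 \/ v 0 p = 1).
exfalso.
have p0' : 0 < v 0 p by rewrite lt_def p0 andbT; apply/eqP.
have p1' : v 0 p < 1 by rewrite lt_def p1 andbT; apply/eqP => /esym.
have [[q qp /andP[q0 q1]]|hq] := lem (exists2 q, q != p & 0 < v 0 q < 1); last first.
  exfalso.
  have h01 : forall q, q != p -> v 0 q = (v 0 q == 1)%:R.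
    move=> q qp; have /andP[a b] := hc q.
    case: (boolP (v 0 q == 1)) => [/eqP -> //|/eqP q1].
    apply/eqP; rewrite eq_le a andbT.
    rewrite leNgt; apply/negP => qpos; apply: hq; exists q => //.
    by rewrite qpos /= lt_def b andbT; apply/eqP => /esym.
  move: hs; rewrite (bigD1 p) //=.
  under eq_bigr => q qp do rewrite (h01 q qp).
  rewrite -natr_sum => hk.
  set m := (\sum_(i < n | i != p) _)%N in hk.
  have vp : v 0 p = k%:R - m%:R by rewrite -hk addrK.
  case: (ltnP m k) => mk.
    have : (m.+1)%:R <= k%:R :> R by rewrite ler_nat.
    by rewrite -natr1 => H; move: p1'; rewrite vp; lra.
  have : k%:R <= m%:R :> R by rewrite ler_nat.
  by move=> H; move: p0'; rewrite vp; lra.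
pose d := Num.min (Num.min (v 0 p) (1 - v 0 p)) (Num.min (v 0 q) (1 - v 0 q)).
have d0 : 0 < d by rewrite !lt_min p0' q0 !subr_gt0 p1' q1.
have [dp1 dp2] : d <= v 0 p /\ d <= 1 - v 0 p.
  by rewrite /d !ge_min !lexx /= !orbT.
have [dq1 dq2] : d <= v 0 q /\ d <= 1 - v 0 q.
  by rewrite /d !ge_min !lexx /= !orbT.
pose a := v + d *: (dlt p - dlt q).
pose b := v + (- d) *: (dlt p - dlt q).
have inP (e : R) : `|e| <= d -> Pkn k (v + e *: (dlt p - dlt q)).
  move=> ed; split; last by rewrite sum_shift.
  move=> l; rewrite shiftE.
  move: ed; rewrite ler_norml => /andP[e1 e2].
  case: (eqVneq l p) => [->|lp]; first by rewrite eq_sym (negbTE qp) subr0 mulr1; apply/andP; split; lra.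
  case: (eqVneq l q) => [->|lq]; first by rewrite sub0r mulrN1; apply/andP; split; lra.
  by rewrite subrr mulr0 addr0 hc.
have Pa : Pkn k a by apply: inP; rewrite ger0_norm // ltW.
have Pb : Pkn k b by apply: inP; rewrite normrN ger0_norm // ltW.
have hab := hv a b (1/2) Pa Pb.
have : a = b.
  apply: hab; first by apply/andP; split; lra.
  rewrite /a /b /dlt; apply/matrixP => i j; by rewrite !mxE; field.
move/(congr1 (fun M : 'rV[R]_n => M 0 p)); rewrite /a /b !shiftE.
rewrite eqxx eq_sym (negbTE qp) subr0 mulr1 => H.
move: H; rewrite mulr1 => H.
lra.
Qed.

End Vert.
Arguments dlt {R n}.

Unset Implicit Arguments. Set Strict Implicit.

Theorem lemma7p5 (R : realType) (n k : nat) (hk1 : (1 < k)%N) (hk2 : (k < n - 1)%N)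
  (t : tree R n) (hF : strong_BF (@Pkn R n k) t)
  (v v' : 'rV[R]_n) (hv : is_vertex (@Pkn R n k) v) (hv' : is_vertex (@Pkn R n k) v')
  (hvv' : v != v') (T : nat) :
  forall i : 'I_n, is_derive v' (delta_mx 0 i) (P_vT t v T) 0.
Proof.
have hF' := hF; case: hF' => hc _ _ _.
have v01 := @vertex01 R n k v' hv'.
have [[vc vs] _] := hv; have [[v'c v's] _] := hv'.
pose P := P_vT t v T.
have dP x : differentiable P x := diff_P t v T x.
have e01 : ((0:R) == 1) = false by rewrite eq_sym oner_eq0.
pose term (l : 'I_n) (y : 'rV[R]_n) := if v' 0 l == 1 then 1 - y 0 l else y 0 l.
have term_ge0 l (y : 'rV[R]_n) : (forall m, 0 <= y 0 m <= 1) -> 0 <= term l y.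
  move=> hy; have /andP[a b] := hy l; rewrite /term; case: ifP => _ //.
  by rewrite subr_ge0.
pose fij (i j : 'I_n) (y : 'rV[R]_n) :=
  \sum_l (if (l != i) && (l != j) then term l y else 0).
have fij_ge0 i j (y : 'rV[R]_n) : (forall m, 0 <= y 0 m <= 1) -> 0 <= fij i j y.
  by move=> hy; apply: sumr_ge0 => l _; case: ifP => // _; exact: term_ge0.
have fij_aff i j : exists c (wt : 'I_n -> R), forall y, fij i j y = c + \sum_l wt l * y 0 l.
  exists (\sum_l (if (l != i) && (l != j) then (if v' 0 l == 1 then 1 else 0) else 0)).
  exists (fun l => if (l != i) && (l != j) then (if v' 0 l == 1 then -1 else 1) else 0).
  move=> y; rewrite /fij -big_split; apply: eq_bigr => l _ /=; rewrite /term.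
  case: ifP => _; last by ring.
  by case: ifP => _; ring.
have P_ge0 (x : 'rV[R]_n) : (forall m, 0 <= x 0 m <= 1) -> 0 <= P x.
  move=> hx; apply: sumr_ge0 => d _; apply: sumr_ge0 => s _.
  case: eqP => // E; exact: (@path_prob_ge0 R n t s x hc (leaf_reached E) hx).
have pairP i j (h : R) : v' 0 i = 1 -> v' 0 j = 0 -> 0 < fij i j v -> 0 <= h <= 1 ->
    P (v' + h *: (dlt j - dlt i)) = 0.
  move=> vi vj fpos /andP[h0 h1].
  have ij : i != j by apply/eqP => ij; move: vi; rewrite ij vj => /eqP; rewrite e01.
  set x := v' + h *: (dlt j - dlt i).
  have cx : forall m, 0 <= x 0 m <= 1.
    move=> m; rewrite /x shiftE.
    case: (eqVneq m i) => [->|mi].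
      by rewrite (negbTE ij) vi /=; apply/andP; split; lra.
    case: (eqVneq m j) => [->|mj].
      by rewrite vj /=; apply/andP; split; lra.
    by rewrite subrr mulr0 addr0 v'c.
  have Px : Pkn k x by split => //; rewrite /x sum_shift.
  have [c [wt fE]] := fij_aff i j.
  have fx : c + \sum_l wt l * x 0 l = 0.
    rewrite -fE /fij big1 // => l _; case: ifP => // /andP[li lj].
    rewrite /term /x shiftE (negbTE li) (negbTE lj) subrr mulr0 addr0.
    by case: (v01 l) => ->; rewrite ?eqxx ?subrr ?e01.
  have fp : forall y, Pkn k y -> 0 <= c + \sum_l wt l * y 0 l.
    by move=> y [hy _]; rewrite -fE; exact: fij_ge0.
  have := @face_zero R n t k hF c wt x Px fx fp v T.
  rewrite -fE pmulr_rle0 // => Ple.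
  by apply/le_anti; rewrite Ple P_ge0.
have agree i j : fij i j v = 0 -> forall l, l != i -> l != j -> v 0 l = v' 0 l.
  move=> f0 l li lj.
  have nn : forall m : 'I_n, xpredT m ->
      0 <= (if (m != i) && (m != j) then term m v else 0).
    by move=> m _; case: ifP => // _; exact: term_ge0.
  have := @psumr_eq0P _ _ xpredT _ nn f0 l isT.
  rewrite li lj /= /term.
  case: (v01 l) => ->; rewrite ?eqxx ?e01 //.
  by move/eqP; rewrite subr_eq0 eq_sym => /eqP.
have eq_exc p : (forall l, l != p -> v 0 l = v' 0 l) -> v = v'.
  move=> hl; apply/matrixP => a l; rewrite (ord1 a).
  case: (eqVneq l p) => [->|lp]; last exact: hl.
  have := vs; rewrite -v's (bigD1 p) //= [in RHS](bigD1 p) //=.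
  have -> : \sum_(i < n | i != p) v 0 i = \sum_(i < n | i != p) v' 0 i.
    by apply: eq_bigr => i ip; exact: hl.
  by move/addIr.
pose S := finset (fun l : 'I_n => v' 0 l == 1).
have cardS : #|S| = k.
  have : \sum_l v' 0 l = #|S|%:R.
    rewrite -sum1_card natr_sum (bigID (fun l => l \in S)) /=.
    rewrite [X in _ + X]big1 ?addr0; last first.
      by move=> l; rewrite /S inE; case: (v01 l) => ->; rewrite ?eqxx.
    by apply: eq_bigr => l; rewrite /S inE => /eqP.
  by rewrite v's => /eqP; rewrite eqr_nat => /eqP.
have cardZ : #|~: S| = (n - k)%N.
  have h := cardsC S; rewrite cardS in h; move: h; rewrite card_ord; lia.
have S2 : (1 < #|S|)%N by rewrite cardS.
have Z2 : (1 < #|~: S|)%N by rewrite cardZ; lia.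
have inS l : (l \in S) = (v' 0 l == 1) by rewrite /S inE.
have inZ l : (l \in ~: S) = (v' 0 l == 0).
  rewrite inE inS; case: (v01 l) => ->; rewrite ?eqxx ?e01 //.
  by rewrite oner_eq0.
have partS i : v' 0 i = 1 -> exists2 j, v' 0 j = 0 & 0 < fij i j v.
  move=> vi; have /card_gt1P [j1 [j2 [h1 h2 j12]]] := Z2.
  move: h1 h2; rewrite !inZ => /eqP h1 /eqP h2.
  have [p1|] := ltrP 0 (fij i j1 v); first by exists j1.
  move=> f1; have {}f1 : fij i j1 v = 0 by apply/le_anti; rewrite f1 fij_ge0.
  have [p2|] := ltrP 0 (fij i j2 v); first by exists j2.
  move=> f2; have {}f2 : fij i j2 v = 0 by apply/le_anti; rewrite f2 fij_ge0.
  exfalso; move/eqP: hvv'; apply; apply: (eq_exc i) => l li.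
  case: (eqVneq l j1) => [lj1|lj1]; last exact: (agree _ _ f1).
  apply: (agree _ _ f2) => //; rewrite lj1 //.
have partZ j : v' 0 j = 0 -> exists2 i, v' 0 i = 1 & 0 < fij i j v.
  move=> vj; have /card_gt1P [i1 [i2 [h1 h2 i12]]] := S2.
  move: h1 h2; rewrite !inS => /eqP h1 /eqP h2.
  have [p1|] := ltrP 0 (fij i1 j v); first by exists i1.
  move=> f1; have {}f1 : fij i1 j v = 0 by apply/le_anti; rewrite f1 fij_ge0.
  have [p2|] := ltrP 0 (fij i2 j v); first by exists i2.
  move=> f2; have {}f2 : fij i2 j v = 0 by apply/le_anti; rewrite f2 fij_ge0.
  exfalso; move/eqP: hvv'; apply; apply: (eq_exc j) => l lj.
  case: (eqVneq l i1) => [li1|li1]; last exact: (agree _ _ f1).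
  apply: (agree _ _ f2) => //; rewrite li1 //.
have Pv'0 : P v' = 0.
  have /card_gt0P [i0 hi0] : (0 < #|S|)%N by rewrite cardS; lia.
  move: hi0; rewrite inS => /eqP vi0.
  have [j0 vj0 fp] := partS i0 vi0.
  have := pairP i0 j0 0 vi0 vj0 fp; rewrite scale0r addr0; apply.
  by rewrite lexx ler01.
have der u : derivable P v' u by apply: diff_derivable.
have DS i : v' 0 i = 1 -> 'd P v' (dlt i) <= 0.
  move=> vi.
  have := @dir_ge R n P v' (- dlt i) (der _).
  rewrite deriveE // linearN oppr_ge0; apply => h /andP[h0 h1].
  rewrite Pv'0; apply: P_ge0 => m; rewrite !mxE eqxx /=.
  case: (eqVneq m i) => [->|mi] /=; last by rewrite oppr0 mulr0 add0r v'c.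
  by rewrite vi mulrN1; apply/andP; split; lra.

have DZ j : v' 0 j = 0 -> 0 <= 'd P v' (dlt j).
  move=> vj.
  have := @dir_ge R n P v' (dlt j) (der _).
  rewrite deriveE //; apply => h /andP[h0 h1].
  rewrite Pv'0; apply: P_ge0 => m; rewrite !mxE eqxx /=.
  case: (eqVneq m j) => [->|mj] /=; last by rewrite mulr0 add0r v'c.
  by rewrite vj mulr1 addr0; apply/andP; split; lra.
have Dpair i j : v' 0 i = 1 -> v' 0 j = 0 -> 0 < fij i j v ->
    'd P v' (dlt j) - 'd P v' (dlt i) <= 0.
  move=> vi vj fp.
  have := @dir_le R n P v' (dlt j - dlt i) (der _).
  rewrite deriveE // linearB; apply => h /andP[h0 h1].
  rewrite [h *: _ + _]addrC pairP // ?Pv'0 //; apply/andP; split; exact: ltW.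
move=> i; apply: DeriveDef; first exact: der.
rewrite deriveE //; change (delta_mx 0 i) with (@dlt R n i).
case: (v01 i) => vi.
  have [i' vi' fp] := partZ i vi.
  have := DZ i vi; have := DS i' vi'; have := Dpair i' i vi' vi fp; lra.
have [j vj fp] := partS i vi.
have := DZ j vj; have := DS i vi; have := Dpair i j vi vj fp; lra.
Qed.
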